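(* Let $F$, $H$, $X$, $\Omega$, $Q$ and the sequences generated by the IneIREG method be as described in the context, and suppose $H$ is $\mu$-strongly monotone for some $\mu>0$. Suppose $0<\lambda_k<1/L_k$ for all $k\ge0$, where $L_k:=L_F+\eta_kL_H$; and $\alpha_0\in[0,1]$ and $\alpha_{k+1}\le(1-\beta_k)\alpha_k$ for all $k\ge0$, where $\beta_k:=\big(\frac{1}{1-\lambda_k^2L_k^2}+\frac{1}{2\lambda_k\eta_k\mu}\big)^{-1}$. Define $p_{-1}:=1$ and $p_k:=\big(\prod_{i=0}^k(1-\beta_i)\big)^{-1}$ for $k\ge0$. Then for all $k\ge1$, $$\sum_{j=0}^{k-1}p_{j-1}\delta_j\le2kD_X^2.$$
   Context: Work in $\mathbb{R}^n$ with Euclidean inner product $\langle\cdot,\cdot\rangle$ and norm $\|\cdot\|$. The maps $F\colon \mathrm{Dom}\,F\to\mathbb{R}^n$ and $H\colon\mathrm{Dom}\,H\to\mathbb{R}^n$ are monotone and Lipschitz continuous with constants $L_F>0$ and $L_H>0$; $H$ is $\mu$-strongly monotone means $\langle H(x)-H(y),x-y\rangle\ge\mu\|x-y\|^2$ for all $x,y\in\mathrm{Dom}\,H$. $X$ is a nonempty compact convex set and $\Omega$ a nonempty closed convex set with $X\subset\Omega\subset\mathrm{Dom}\,F\cap\mathrm{Dom}\,H$; $P_X,P_\Omega$ denote orthogonal projections. $Q:=\{x\in X:\langle F(x),y-x\rangle\ge0\ \forall y\in X\}$ is assumed nonempty. $D_X:=\sup_{x,y\in X}\|x-y\|$. IneIREG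 method: start with $x_0=x_{-1}\in X$; for $k=0,1,\dots$, with parameters $\alpha_k\ge0$, $\lambda_k>0$, $\eta_k>0$, set $w_k=x_k+\alpha_k(x_k-x_{k-1})$, $w'_k=P_\Omega(w_k)$, $y_k=P_X\big(w_k-\lambda_k(F(w'_k)+\eta_kH(w'_k))\big)$, $x_{k+1}=P_X\big(w_k-\lambda_k(F(y_k)+\eta_kH(y_k))\big)$. Also $\delta_k:=\alpha_k(1+\alpha_k)\|x_k-x_{k-1}\|^2$ for $k\ge0$. *)

(* Defs.v *)
From HB Require Import structures.
From mathcomp Require Import all_boot all_order all_algebra.
From mathcomp Require Import all_classical all_reals all_analysis.
Set Implicit Arguments. Unset Strict Implicit. Unset Printing Implicit Defensive.
Import Order.TTheory GRing.Theory Num.Theory.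
Import numFieldNormedType.Exports.
Local Open Scope classical_set_scope.
Local Open Scope ring_scope.

Section Defs.
Variables (R : realType) (n : nat).
Local Notation vec := 'rV[R]_n.

Definition dotp (u v : vec) : R := \sum_(i < n) u ord0 i * v ord0 i.
Definition enorm (u : vec) : R := Num.sqrt (dotp u u).

Definition convex_set_ (A : set vec) : Prop :=
  forall x y t, A x -> A y -> 0 <= t -> t <= 1 -> A (t *: x + (1 - t) *: y).

Definition is_proj (A : set vec) (P : vec -> vec) : Prop :=
  forall y, A (P y) /\ forall z, A z -> enorm (y - P y) <= enorm (y - z).

Definition op_monotone (D : set vec) (G : vec -> vec) : Prop :=
  forall x y, D x -> D y -> 0 <= dotp (G x - G y) (x - y).

Definition op_strongly_monotone (D : set vec) (G : vec -> vec) (mu : R) : Prop :=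
  forall x y, D x -> D y -> mu * enorm (x - y) ^+ 2 <= dotp (G x - G y) (x - y).

Definition op_lipschitz (D : set vec) (G : vec -> vec) (L : R) : Prop :=
  forall x y, D x -> D y -> enorm (G x - G y) <= L * enorm (x - y).

Definition VIsol (X : set vec) (F : vec -> vec) : set vec :=
  [set x | X x /\ forall y, X y -> 0 <= dotp (F x) (y - x)].

Definition diam (X : set vec) : R :=
  sup [set enorm (x - y) | x in X & y in X].

(* the iterate x_{k-1}, with the convention x_{-1} = x_0 *)
Definition prev_iter (x : nat -> vec) (k : nat) : vec :=
  if k is k'.+1 then x k' else x 0%N.
End Defs.

Definition Lk {R : realType} (LF LH : R) (eta : nat -> R) (k : nat) : R :=
  LF + eta k * LH.

Definition betak {R : realType} (LF LH mu : R) (lam eta : nat -> R) (k : nat) : R :=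
  ((1 - lam k ^+ 2 * Lk LF LH eta k ^+ 2)^-1 + (2 * lam k * eta k * mu)^-1)^-1.

Definition pk {R : realType} (beta : nat -> R) (k : nat) : R :=
  (\prod_(i < k.+1) (1 - beta i))^-1.

(* p_{j-1}, with p_{-1} := 1 *)
Definition pprev {R : realType} (beta : nat -> R) (j : nat) : R :=
  if j is j'.+1 then pk beta j' else 1.

Definition deltak {R : realType} {n : nat} (alpha : nat -> R) (x : nat -> 'rV[R]_n)
  (k : nat) : R :=
  alpha k * (1 + alpha k) * enorm (x k - prev_iter x k) ^+ 2.

(* Main.v *)
Require Import Defs.
From HB Require Import structures.
From mathcomp Require Import all_boot all_order all_algebra.
From mathcomp Require Import all_classical all_reals all_analysis.
From mathcomp Require Import lra ring.
Import Order.TTheory GRing.Theory Num.Theory.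
Import numFieldNormedType.Exports.
Local Open Scope classical_set_scope.
Local Open Scope ring_scope.

Lemma entry_le {R : realType} {n} (u : 'rV[R]_n) i : `|u ord0 i| <= `|u|.
Proof.
change (`|u ord0 i| <= mx_norm u); rewrite mx_normrE.
by apply/bigmax_geP; right; exists (ord0, i).
Qed.

Lemma sumsq_le (R : realType) (I : Type) (s : seq I) (f : I -> R) :
  (forall i, 0 <= f i) ->
  \sum_(i <- s) f i ^+ 2 <= (\sum_(i <- s) f i) ^+ 2.
Proof.
move=> f0; elim: s => [|a s IH]; first by rewrite !big_nil expr0n.
rewrite !big_cons.
have h : 0 <= \sum_(i <- s) f i by apply: sumr_ge0.
have := f0 a; nra.
Qed.

Lemma enorm_le {R : realType} {n} (u : 'rV[R]_n) :
  enorm u <= \sum_(i < n) `|u ord0 i|.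
Proof.
rewrite /enorm /dotp.
have h : 0 <= \sum_(i < n) `|u ord0 i| by apply: sumr_ge0.
rewrite -(ger0_norm h) -sqrtr_sqr ler_sqrt ?exprn_ge0 //.
have := @sumsq_le R _ (index_enum 'I_n) (fun i => `|u ord0 i|) (fun i => normr_ge0 _).
apply: le_trans; rewrite le_eqVlt; apply/orP; left; apply/eqP.
by apply: eq_bigr => i _; rewrite real_normK ?num_real // expr2.
Qed.


Theorem lemma4p13 (R : realType) (n : nat)
  (F H : 'rV[R]_n -> 'rV[R]_n) (DomF DomH X Omega : set 'rV[R]_n)
  (PX POm : 'rV[R]_n -> 'rV[R]_n) (LF LH mu : R)
  (alpha lam eta : nat -> R) (x w w' y : nat -> 'rV[R]_n) :
  (* F and H monotone and Lipschitz on their domains *)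
  op_monotone DomF F -> op_monotone DomH H ->
  0 < LF -> 0 < LH ->
  op_lipschitz DomF F LF -> op_lipschitz DomH H LH ->
  (* H is mu-strongly monotone *)
  0 < mu -> op_strongly_monotone DomH H mu ->
  (* X compact convex nonempty, Omega closed convex nonempty, X ⊂ Ω ⊂ Dom F ∩ Dom H *)
  X !=set0 -> compact X -> convex_set_ X ->
  Omega !=set0 -> closed Omega -> convex_set_ Omega ->
  X `<=` Omega -> Omega `<=` DomF `&` DomH ->
  is_proj X PX -> is_proj Omega POm ->
  (* Q nonempty *)
  VIsol X F !=set0 ->
  (* parameters *)
  (forall k, 0 <= alpha k) -> (forall k, 0 < lam k) -> (forall k, 0 < eta k) ->
  (* IneIREG iterates, x_{-1} = x_0 *)
  X (x 0%N) ->
  (forall k, w k = x k + alpha k *: (x k - prev_iter x k)) ->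
  (forall k, w' k = POm (w k)) ->
  (forall k, y k = PX (w k - lam k *: (F (w' k) + eta k *: H (w' k)))) ->
  (forall k, x k.+1 = PX (w k - lam k *: (F (y k) + eta k *: H (y k)))) ->
  (* step sizes and inertial parameters *)
  (forall k, lam k < (Lk LF LH eta k)^-1) ->
  0 <= alpha 0%N <= 1 ->
  (forall k, alpha k.+1 <= (1 - betak LF LH mu lam eta k) * alpha k) ->
  forall k : nat, (1 <= k)%N ->
    \sum_(j < k) pprev (betak LF LH mu lam eta) j * deltak alpha x j
      <= 2 * k%:R * diam X ^+ 2.

Proof.
move=> _ _ LF0 LH0 _ _ mu0 _ _ cX _ _ _ _ _ _ hPX _ _ al0 lam0 eta0 X0 _ _ _ hx lamL al01 alS k _.
have Xx : forall j, X (x j).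
  by case=> [//|j]; rewrite hx; exact: (hPX _).1.
have Xp : forall j, X (prev_iter x j) by case=> [|j] /=; apply: Xx.
have [Mb HM] : exists M0 : R, forall z, X z -> `|z| <= M0.
  have [B [_ HM0]] := compact_bounded cX.
  exists (B + 1) => z Xz; apply: (HM0 (B + 1)) => //; by rewrite ltrDl ltr01.
have ubS : has_ubound [set enorm (a - b) | a in X & b in X].
  exists (n%:R * (Mb + Mb)) => _ [a Xa [b Xb <-]].
  apply: (le_trans (enorm_le _)).
  apply: le_trans (_ : \sum_(i < n) `|a - b| <= _).
    by apply: ler_sum => i _; apply: entry_le.
  rewrite sumr_const card_ord -(mulr_natl `|a - b|); apply: ler_wpM2l => //.
  by apply: (le_trans (ler_normB _ _)); apply: lerD; apply: HM.
have eD : forall j, enorm (x j - prev_iter x j) <= diam X.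
  move=> j; apply: ub_le_sup => //; exists (x j) => //; by exists (prev_iter x j).
have e0 : forall (v : 'rV[R]_n), 0 <= enorm v by move=> v; exact: sqrtr_ge0.
set be := betak LF LH mu lam eta.
have beP : forall i, 0 < be i < 1.
  move=> i; rewrite /be /betak.
  have L0 : 0 < Lk LF LH eta i by rewrite /Lk addr_gt0 // mulr_gt0.
  have h1 : lam i * Lk LF LH eta i < 1.
    have := lamL i; rewrite -(ltr_pM2r L0) mulVf ?gt_eqF //.
  have la := lam0 i.
  have t0 : 0 < lam i * Lk LF LH eta i by apply: mulr_gt0.
  rewrite -exprMn.
  move: h1 t0; set t := lam i * Lk LF LH eta i => h1 t0.
  have a0 : 0 < 1 - t ^+ 2 by rewrite expr2; nra.
  have a1 : 1 - t ^+ 2 <= 1 by rewrite expr2; nra.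
  have b0 : 0 < (2 * lam i * eta i * mu)^-1.
    by rewrite invr_gt0 !mulr_gt0.
  have ia : 1 <= (1 - t ^+ 2)^-1 by rewrite invf_ge1.
  have s0 : 0 < (1 - t ^+ 2)^-1 + (2 * lam i * eta i * mu)^-1.
    by apply: (lt_le_trans ltr01); apply: (le_trans ia); rewrite lerDl; exact: ltW.
  apply/andP; split; first by rewrite invr_gt0.
  by rewrite invf_lt1 //; apply: (le_lt_trans ia); rewrite ltrDl.
set P := fun j => \prod_(i < j) (1 - be i).
have P0 : forall j, 0 < P j.
  move=> j; apply: prodr_gt0 => i _; have := beP i; rewrite subr_gt0; case/andP=> _ //.
have P1 : forall j, P j <= 1.
  move=> j; apply: prodr_ile1 => i _; have := beP i; case/andP=> b1 b2.
  apply/andP; split; [rewrite subr_ge0; exact: ltW | rewrite lerBlDr lerDl; exact: ltW].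
have aP : forall j, alpha j <= P j.
  elim=> [|j IH]; first by rewrite /P big_ord0; case/andP: al01.
  apply: (le_trans (alS j)); rewrite /P big_ord_recr /= [X in _ <= X]mulrC.
  apply: ler_wpM2l; last exact: IH.
  by have := beP j; case/andP=> _ b; rewrite subr_ge0; exact: ltW.
have pp : forall j, pprev be j = (P j)^-1.
  by case=> [|j] //=; rewrite /P big_ord0 invr1.
have term : forall j, pprev be j * deltak alpha x j <= 2 * diam X ^+ 2.
  move=> j; rewrite pp /deltak.
  have q0 : 0 < (P j)^-1 by rewrite invr_gt0.
  have qP : (P j)^-1 * P j = 1 by rewrite mulVf ?gt_eqF.
  have he := e0 (x j - prev_iter x j); have hD := eD j.
  move: he hD; set e := enorm _; set D := diam X => he hD.
  have ha := al0 j; have hP := aP j; have h1 := P1 j; have hP0 := P0 j.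
  have : alpha j * (1 + alpha j) * e ^+ 2 <= P j * (2 * D ^+ 2).
    have e2 : e ^+ 2 <= D ^+ 2 by rewrite !expr2; apply: ler_pM.
    have a2 : 1 + alpha j <= 2 by lra.
    have := ler_pM (mulr_ge0 ha (addr_ge0 ler01 ha)) (sqr_ge0 e) (ler_pM ha (addr_ge0 ler01 ha) hP a2) e2.
    move=> HH; apply: (le_trans HH); rewrite le_eqVlt; apply/orP; left; apply/eqP; ring.
  move=> HH; apply: (le_trans (ler_wpM2l (ltW q0) HH)).
  by rewrite mulrA qP mul1r.
have HS : \sum_(j < k) pprev be j * deltak alpha x j <= \sum_(j < k) (2 * diam X ^+ 2).
  by apply: ler_sum => j _; apply: term.
apply: (le_trans HS).
rewrite sumr_const card_ord -mulr_natl le_eqVlt; apply/orP; left; apply/eqP; ring.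
Qed.
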